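(* Let $m$ be a positive integer and $\mathcal{U}=\{S_0,S_{2,1^0},\ldots,S_{2,1^{m-1}}\}$. Define the following vectors $(y_0,\ldots,y_m)\in\mathbb{R}^{m+1}$ (where a vector is only defined when its index range for $i$ is nonempty, and $k$ ranges over $0,\ldots,m$): $\mathbf{s}_{1,m}$: $y_0=3,y_1=6$, $y_k=\max(3k,2k+4)$ for $k\ge2$ (i.e. $(3,6,8,10,12,15,\ldots,3m)$); $\mathbf{s}_{2,m}$: $y_0=6,y_1=12,y_2=16$, $y_k=6k+3$ for $k\ge3$; $\mathbf{s}_{3,m}$: $y_0=2,y_1=4,y_2=5$, $y_k=2k$ for $k\ge3$; $\mathbf{s}_{4,m}$: $y_0=3,y_1=6,y_2=8$, $y_k=3k+1$ for $k\ge3$; $\mathbf{r}_{1,m,i}$ ($5\le i\le m-1$): $y_0=6i-15,y_1=12i-30,y_2=16i-40$, $y_k=(6i-18)k+3i$ for $3\le k\le i$, $y_k=(6i-15)k$ for $k\ge i$; $\mathbf{r}_{2,m,i}$ ($5\le i\le m-1$): $y_0=i+2$, $y_k=i(k+2)$ for $1\le k\le i$, $y_k=(i+2)k$ for $k\ge i$; $\mathbf{r}_{3,m,i}$ ($5\le i\le m-1$): $y_0=3i-9,y_1=6i-18,y_2=8i-24$, $y_k=(3i-10)k+i$ for $3\le k\le i$, $y_k=(3i-9)k$ for $k\ge i$; $\mathbf{r}_{4,m,i}$ ($5\le i\le m-1$): $y_0=2i-5,y_1=4i-10$, $y_k=(2i-6)k+i$ for $2\le k\le i$, $y_k=(2i-5)k$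 for $k\ge i$; $\mathbf{r}_{5,m,i}$ ($3\le i\le m-1$): $y_k=\max(i,k)$ for all $k$; $\mathbf{r}_{6,m,i}$ ($4\le i\le m-1$): $y_0=i+1,y_1=3i-1$, $y_k=(i-1)k+2i$ for $2\le k\le i$, $y_k=(i+1)k$ for $k\ge i$. Then all of $\mathbf{s}_{j,m}$ ($1\le j\le4$) and $\mathbf{r}_{l,m,i}$ ($1\le l\le6$, $i$ in the stated range) lie in $\operatorname{trop}(\mathcal{N}_{\mathcal{U}})$.
   Context: All graphs are finite; $\hom(H;G)$ is the number of graph homomorphisms from $H$ to $G$. $S_0$ is a single vertex; for $k\ge0$, $S_{2,1^k}$ is the tree with vertex set $\{1,\ldots,k+3\}$ and edge set $\{\{1,j\}:2\le j\le k+2\}\cup\{\{k+2,k+3\}\}$. $\mathcal{N}_{\mathcal{U}}$ is the set of vectors $(\hom(S_0;G),\hom(S_{2,1^0};G),\ldots,\hom(S_{2,1^{m-1}};G))$ over all graphs $G$; $\operatorname{trop}(\mathcal{N}_{\mathcal{U}})$ is the closure of the conical hull of the coordinatewise logarithms of the points of $\mathcal{N}_{\mathcal{U}}$ with all coordinates positive (equivalently $\lim_{\tau\to\infty}\log_\tau$ of that set). *)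

(* Defs.v *)
From HB Require Import structures.
From mathcomp Require Import all_boot all_order all_algebra.
From mathcomp Require Import all_classical all_reals all_analysis.
Set Implicit Arguments. Unset Strict Implicit. Unset Printing Implicit Defensive.
Import Order.TTheory GRing.Theory Num.Theory.
Import numFieldNormedType.Exports.
Local Open Scope classical_set_scope.
Local Open Scope ring_scope.

Definition simple_graph (n : nat) (e : rel 'I_n) : Prop :=
  symmetric e /\ irreflexive e.

(* Edge set of S_{2,1^k}, on vertex set {1,...,k+3} (as in the paper):
   {1,j} for 2 <= j <= k+2, and {k+2,k+3}. *)
Definition S21_edge (k a b : nat) : bool :=
  [|| (a == 1%N) && (2 <= b <= k.+2)%N,
      (b == 1%N) && (2 <= a <= k.+2)%N,
      (a == k.+2) && (b == k.+3) |
      (b == k.+2) && (a == k.+3)].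

Definition hom_S0 (n : nat) (e : rel 'I_n) : nat := #|'I_n|.

(* hom(S_{2,1^k}; G): maps f from {1..k+3} (vertex v encoded as v-1 : 'I_(k+3))
   to V(G) sending every edge to an edge. *)
Definition hom_S21 (k : nat) (n : nat) (e : rel 'I_n) : nat :=
  #|[set f : {ffun 'I_(k.+3) -> 'I_n} |
      [forall a : 'I_(k.+3), forall b : 'I_(k.+3),
         S21_edge k a.+1 b.+1 ==> e (f a) (f b)]]|.

Definition homvec (m n : nat) (e : rel 'I_n) (k : 'I_m.+1) : nat :=
  if (k == 0 :> nat) then hom_S0 e else hom_S21 k.-1 e.

Definition logN (R : realType) (m : nat) : set 'rV[R]_m.+1 :=
  [set v | exists (n : nat) (e : rel 'I_n), simple_graph e /\
     (forall k, (0 < @homvec m n e k)%N) /\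
     v = \row_(k < m.+1) ln ((@homvec m n e k)%:R : R)].

Definition conic_hull (R : realType) (p : nat) (S : set 'rV[R]_p) : set 'rV[R]_p :=
  [set v | exists (N : nat) (c : 'I_N -> R) (w : 'I_N -> 'rV[R]_p),
     (forall i, 0 <= c i) /\ (forall i, S (w i)) /\ v = \sum_(i < N) c i *: w i].

Definition tropNU (R : realType) (m : nat) : set 'rV[R]_m.+1 :=
  closure (@conic_hull R m.+1 (@logN R m)).

Definition vec_of (R : realType) (m : nat) (y : nat -> R) : 'rV[R]_m.+1 :=
  \row_(k < m.+1) y k.

Section Vectors.
Variable R : realType.
Local Notation "n %:R" := (n%:R : R).

Definition s1 (k : nat) : R :=
  if k == 0%N then 3 else if k == 1%N then 6 else Num.max (3 * k%:R) (2 * k%:R + 4).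
Definition s2 (k : nat) : R :=
  if k == 0%N then 6 else if k == 1%N then 12 else if k == 2%N then 16
  else 6 * k%:R + 3.
Definition s3 (k : nat) : R :=
  if k == 0%N then 2 else if k == 1%N then 4 else if k == 2%N then 5
  else 2 * k%:R.
Definition s4 (k : nat) : R :=
  if k == 0%N then 3 else if k == 1%N then 6 else if k == 2%N then 8
  else 3 * k%:R + 1.

Definition r1 (i k : nat) : R :=
  let x := i%:R in
  if k == 0%N then 6 * x - 15 else if k == 1%N then 12 * x - 30
  else if k == 2%N then 16 * x - 40
  else if (k <= i)%N then (6 * x - 18) * k%:R + 3 * x
  else (6 * x - 15) * k%:R.
Definition r2 (i k : nat) : R :=
  let x := i%:R in
  if k == 0%N then x + 2
  else if (k <= i)%N then x * (k%:R + 2)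
  else (x + 2) * k%:R.
Definition r3 (i k : nat) : R :=
  let x := i%:R in
  if k == 0%N then 3 * x - 9 else if k == 1%N then 6 * x - 18
  else if k == 2%N then 8 * x - 24
  else if (k <= i)%N then (3 * x - 10) * k%:R + x
  else (3 * x - 9) * k%:R.
Definition r4 (i k : nat) : R :=
  let x := i%:R in
  if k == 0%N then 2 * x - 5 else if k == 1%N then 4 * x - 10
  else if (k <= i)%N then (2 * x - 6) * k%:R + x
  else (2 * x - 5) * k%:R.
Definition r5 (i k : nat) : R := Num.max i%:R k%:R.
Definition r6 (i k : nat) : R :=
  let x := i%:R in
  if k == 0%N then x + 1 else if k == 1%N then 3 * x - 1
  else if (k <= i)%N then (x - 1) * k%:R + 2 * x
  else (x + 1) * k%:R.
End Vectors.

(* Main.v *)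
Require Import Defs.
From HB Require Import structures.
From mathcomp Require Import all_boot all_order all_algebra.
From mathcomp Require Import all_classical all_reals all_analysis.
From mathcomp Require Import ring lra zify.
Module PA.
Set Implicit Arguments. Unset Strict Implicit. Unset Printing Implicit Defensive.

Lemma S21_e1 k a b : a = 1%N -> (2 <= b <= k.+2)%N -> S21_edge k a b.
Proof. by move=> -> hb; rewrite /S21_edge eqxx hb. Qed.
Lemma S21_e3 k a b : a = k.+2 -> b = k.+3 -> S21_edge k a b.
Proof. move=> -> ->; rewrite /S21_edge; apply/or4P; apply: Or43; by rewrite !eqxx. Qed.

Section HomCount.
Variables (n : nat) (e : rel 'I_n).
Definition degn (v : 'I_n) : nat := (\sum_(u < n) e v u)%N.

Variable k : nat.
Definition i1 : 'I_k.+3 := inord k.+1.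
Lemma i1E : (i1 : nat) = k.+1. Proof. by rewrite /i1 inordK. Qed.

Definition Gb (v u : 'I_n) (i : 'I_k.+3) (y : 'I_n) : bool :=
  if (i : nat) == 0%N then y == v
  else if (i : nat) == k.+1 then (y == u) && e v u
  else if (i : nat) == k.+2 then e u y else e v y.

Lemma GbP (f : {ffun 'I_k.+3 -> 'I_n}) v u : symmetric e ->
  [forall i, Gb v u i (f i)] =
  [&& f ord0 == v, f i1 == u &
     [forall a : 'I_k.+3, forall b : 'I_k.+3, S21_edge k a.+1 b.+1 ==> e (f a) (f b)]].
Proof.
move=> esym; apply/forallP/and3P.
- move=> H.
  have H0 := H ord0; rewrite /Gb /= in H0.
  have H1 := H i1; rewrite /Gb i1E /= eqxx in H1.
  have Hne : (k.+2 == k.+1) = false by apply/negbTE/eqP; lia.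
  have H2 := H ord_max; rewrite /Gb /= Hne eqxx in H2.
  case/andP: H1 => /eqP Hu Hvu.
  have Hm : forall a : 'I_k.+3, (0 < a)%N -> (a < k.+2)%N -> e v (f a).
    move=> a a0 ak; have := H a; rewrite /Gb.
    case: (eqVneq (a : nat) 0%N) => [a0'|_]; first by rewrite a0' in a0.
    case: (eqVneq (a : nat) k.+1) => [ak1|_].
      by case/andP => /eqP ->.
    have -> : ((a : nat) == k.+2) = false by apply/negbTE/eqP; lia.
    by [].
  split; [done | by apply/eqP | ]; apply/forallP => a; apply/forallP => b; apply/implyP.
  rewrite /S21_edge => /or4P [] /andP [/eqP Ha Hb].
  + have -> : a = ord0 by apply/val_inj => /=; lia.
    rewrite (eqP H0); apply: Hm; lia.
  + have -> : b = ord0 by apply/val_inj => /=; lia.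
    rewrite (eqP H0) esym; apply: Hm; lia.
  + have -> : a = i1 by apply/val_inj; rewrite /= i1E; lia.
    have -> : b = ord_max by apply/val_inj => /=; move/eqP: Hb; lia.
    by rewrite Hu.
  + have -> : b = i1 by apply/val_inj; rewrite /= i1E; lia.
    have -> : a = ord_max by apply/val_inj => /=; move/eqP: Hb; lia.
    by rewrite Hu esym.
- move=> [/eqP Hv /eqP Hu /forallP HP] i.
  have HE : forall a b : 'I_k.+3, S21_edge k a.+1 b.+1 -> e (f a) (f b).
    by move=> a b; move/forallP: (HP a) => /(_ b) /implyP.
  rewrite /Gb.
  case: (eqVneq (i : nat) 0%N) => [i0|in0]; first by rewrite (_ : i = ord0) ?Hv //; apply/val_inj; rewrite /= i0.
  case: (eqVneq (i : nat) k.+1) => [ik1|ik1].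
    have -> : i = i1 by apply/val_inj; rewrite /= i1E ik1.
    rewrite Hu eqxx /= -Hv -Hu; apply: HE; apply: S21_e1; rewrite ?i1E //=; lia.
  case: (eqVneq (i : nat) k.+2) => [ik2|ik2].
    rewrite -Hu; apply: HE; apply: S21_e3; rewrite ?i1E //=; lia.
  rewrite -Hv; apply: HE; apply: S21_e1 => //=.
  have := ltn_ord i; move/eqP: in0; move/eqP: ik1; move/eqP: ik2; lia.
Qed.

Lemma prod_bool (I : finType) (b : pred I) :
  (\prod_(i : I) (b i : nat))%N = [forall i, b i] :> nat.
Proof.
case: (boolP [forall i, b i]) => H.
  by rewrite big1 // => i _; rewrite (forallP H).
case/forallPn: H => i /negbTE Hi.
by rewrite (bigD1 i) //= Hi mul0n.
Qed.

Definition Hn (v u : 'I_n) (i : nat) : nat :=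
  if i == 0%N then 1%N else if i == k.+1 then (e v u : nat)
  else if i == k.+2 then degn u else degn v.

Lemma sumGb v u (i : 'I_k.+3) : (\sum_y (Gb v u i y : nat))%N = Hn v u i.
Proof.
rewrite /Gb /Hn.
case: ((i : nat) == 0%N).
  by rewrite (bigD1 v) //= eqxx big1 // => y /negbTE ->.
case: ((i : nat) == k.+1).
  rewrite (bigD1 u) //= eqxx /= big1 ?addn0 // => y /negbTE -> //.
by case: ((i : nat) == k.+2).
Qed.

Lemma prodHn v u : (\prod_(i < k.+3) Hn v u i)%N = (degn v ^ k * (e v u * degn u))%N.
Proof.
rewrite -(big_mkord xpredT (Hn v u)) big_nat_recr //= big_nat_recr //= big_ltn //=.
rewrite (@eq_big_nat _ _ _ 1 k.+1 _ (fun _ => degn v)); last first.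
  move=> i /andP [i1 ik]; rewrite /Hn.
  have -> : (i == 0%N) = false by apply/negbTE/eqP; lia.
  have -> : (i == k.+1) = false by apply/negbTE/eqP; lia.
  have -> : (i == k.+2) = false by apply/negbTE/eqP; lia.
  by [].
rewrite prod_nat_const_nat subn1 /= /Hn /=.
have -> : (k.+2 == k.+1) = false by apply/negbTE/eqP; lia.
by rewrite !eqxx mul1n mulnA.
Qed.

Lemma homS21E : symmetric e ->
  hom_S21 k e = (\sum_v degn v ^ k * \sum_u e v u * degn u)%N.
Proof.
move=> esym.
rewrite /hom_S21 -sum1_card big_mkcond /=.
rewrite (eq_bigr (fun f : {ffun 'I_k.+3 -> 'I_n} =>
   \sum_v \sum_u \prod_i (Gb v u i (f i) : nat))%N); last first.
  move=> f _.
  have -> : (f \in [set g : {ffun 'I_k.+3 -> 'I_n} | [forall a : 'I_k.+3, forall b : 'I_k.+3, S21_edge k a.+1 b.+1 ==> e (g a) (g b)]]%classic) = [forall a : 'I_k.+3, forall b : 'I_k.+3, S21_edge k a.+1 b.+1 ==> e (f a) (f b)] by apply/idP/idP => [/set_mem|/mem_set].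
  under eq_bigr do under eq_bigr do rewrite prod_bool (GbP _ _ _ esym).
  rewrite (bigD1 (f ord0)) //= [X in _ + X]big1 ?addn0; last first.
    by move=> v /negbTE Hv; rewrite big1 // => u _; rewrite eq_sym Hv.
  rewrite (bigD1 (f i1)) //= big1 ?addn0; last first.
    by move=> u /negbTE Hu; rewrite eqxx eq_sym Hu.
  by rewrite !eqxx /=; case: [forall a, _].
rewrite exchange_big /=; apply: eq_bigr => v _.
rewrite exchange_big /= big_distrr /=; apply: eq_bigr => u _.
rewrite -(bigA_distr_bigA (fun (i : 'I_k.+3) (y : 'I_n) => (Gb v u i y : nat))) /=.
under eq_bigr do rewrite sumGb.
exact: prodHn.
Qed.
End HomCount.

End PA.
Import PA.

Module PB.
Set Implicit Arguments. Unset Strict Implicit. Unset Printing Implicit Defensive.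
Import Order.TTheory GRing.Theory Num.Theory.
Import numFieldNormedType.Exports.
Local Open Scope classical_set_scope.
Local Open Scope ring_scope.

Lemma ballE (R : realType) p (x y : 'rV[R]_p) (eps : R) : 0 < eps ->
  (forall j, `|x 0 j - y 0 j| < eps) -> ball x eps y.
Proof.
move=> e0 H; rewrite /ball /=; split => // i j; rewrite (ord1 i).
rewrite /ball /=. exact: H.
Qed.

Lemma ln_bounds (R : realType) (h t E C : nat) : (2 <= t)%N -> (0 < C)%N ->
  (h <= C * t ^ E)%N -> (t ^ E <= C * h)%N ->
  `| (E%:R : R) - ln (h%:R) / ln (t%:R) | <= ln (C%:R) / ln (t%:R).
Proof.
move=> t2 C0 h1 h2.
have tpos : (0 : R) < t%:R by rewrite ltr0n; apply: leq_trans t2.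
have Lpos : (0 : R) < ln (t%:R) by apply: ln_gt0; rewrite ltr1n.
have hpos : (0 < h)%N.
  rewrite lt0n; apply/negP => /eqP h0; move: h2; rewrite h0 muln0 leqn0 expn_eq0.
  by case: (t) t2.
have hRpos : (0 : R) < h%:R by rewrite ltr0n.
have CRpos : (0 : R) < C%:R by rewrite ltr0n.
have tEpos : (0 : R) < (t%:R) ^+ E by rewrite exprn_gt0.
have u1 : ln (h%:R) <= ln (C%:R : R) + E%:R * ln (t%:R).
  rewrite mulr_natl -lnXn // -lnM ?posrE ?mulr_gt0 //.
  by rewrite ler_ln ?posrE ?mulr_gt0 // -natrX -natrM ler_nat.
have u2 : E%:R * ln (t%:R) <= ln (C%:R : R) + ln (h%:R).
  rewrite mulr_natl -lnXn // -lnM ?posrE ?mulr_gt0 //.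
  by rewrite ler_ln ?posrE ?mulr_gt0 // -natrX -natrM ler_nat.
rewrite ler_norml; apply/andP; split.
- rewrite -(ler_pM2r Lpos) mulNr mulrBl !divfK ?gt_eqF //; lra.
- rewrite -(ler_pM2r Lpos) mulrBl !divfK ?gt_eqF //; lra.
Qed.

Lemma trop_family (R : realType) m (y : nat -> R) (E : nat -> nat) (C : nat)
  (nn : nat -> nat) (ee : forall t, rel 'I_(nn t)) :
  (0 < C)%N ->
  (forall t, (2 <= t)%N -> simple_graph (ee t)) ->
  (forall j, (j <= m)%N -> y j = (E j)%:R) ->
  (forall t (j : 'I_m.+1), (2 <= t)%N ->
     (homvec (ee t) j <= C * t ^ E j)%N /\ (t ^ E j <= C * homvec (ee t) j)%N) ->
  @tropNU R m (@vec_of R m y).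
Proof.
move=> C0 simp yE bnd B /nbhs_ballP [eps eps0 HB].
have ln2 : (0 : R) < ln 2 by apply: ln_gt0; rewrite ltr1n.
set N := (Num.truncn (ln (C%:R : R) / (eps * ln 2))).+1.
have HN := truncnS_gt (ln (C%:R : R) / (eps * ln 2)).
set t := (2 ^ N)%N.
have t2 : (2 <= t)%N by rewrite /t /N expnS leq_pmulr // expn_gt0.
have Lt : ln (t%:R : R) = N%:R * ln 2 by rewrite /t natrX lnXn // mulr_natl.
have Lpos : (0 : R) < ln (t%:R) by apply: ln_gt0; rewrite ltr1n.
have lnC0 : (0 : R) <= ln (C%:R) by apply: ln_ge0; rewrite ler1n.
have small : ln (C%:R : R) / ln (t%:R) < eps.
  rewrite ltr_pdivrMr // Lt.
  move: HN; rewrite -/N ltr_pdivrMr ?mulr_gt0 // => HN.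
  by apply: (lt_le_trans HN); rewrite mulrCA.
pose w := \row_(k < m.+1) ln ((homvec (ee t) k)%:R : R).
have hpos : forall k : 'I_m.+1, (0 < homvec (ee t) k)%N.
  move=> k; have [_ h2] := bnd t k t2; rewrite lt0n; apply/negP => /eqP h0.
  by move: h2; rewrite h0 muln0 leqn0 expn_eq0; case: (t) t2.
exists ((ln (t%:R : R))^-1 *: w); split.
- exists 1%N, (fun _ => (ln (t%:R : R))^-1), (fun _ => w); split.
    by move=> _; rewrite invr_ge0 ltW.
  split; last by rewrite big_ord1.
  move=> _; exists (nn t), (ee t); split; first exact: simp.
  by split.
- apply: HB; apply: ballE => // j.
  rewrite /vec_of !mxE yE ?(leq_trans (ltn_ord j)) //.
  have [h1 h2] := bnd t j t2.
  apply: le_lt_trans small.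
  rewrite mulrC; apply: ln_bounds => //.
  by rewrite -ltnS.
Qed.

End PB.
Import PB.

Module PC.
Set Implicit Arguments. Unset Strict Implicit. Unset Printing Implicit Defensive.

Section FinGraph.
Variables (T : finType) (e : rel T).
Definition degT (v : T) : nat := (\sum_u (e v u : nat))%N.
Definition sT (v : T) : nat := (\sum_u e v u * degT u)%N.
Definition HT (k : nat) : nat := (\sum_v degT v ^ k * sT v)%N.

Definition trg : rel 'I_#|T| := fun a b => e (enum_val a) (enum_val b).

Lemma sum_enum (F : T -> nat) : (\sum_(a < #|T|) F (enum_val a))%N = (\sum_v F v)%N.
Proof. by rewrite (reindex (@enum_val T _) (onW_bij _ (enum_val_bij T))). Qed.

Lemma trg_deg a : degn trg a = degT (enum_val a).
Proof. rewrite /degn /trg /=. exact: (sum_enum (fun u => (e (enum_val a) u : nat))). Qed.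

Lemma trg_hom k : symmetric e -> hom_S21 k trg = HT k.
Proof.
move=> esym; rewrite homS21E; last by move=> a b; rewrite /trg esym.
rewrite /HT -(sum_enum (fun v => degT v ^ k * sT v)); apply: eq_bigr => a _.
rewrite trg_deg /sT -(sum_enum (fun u => e (enum_val a) u * degT u)).
by rewrite (eq_bigr (fun b => e (enum_val a) (enum_val b) * degT (enum_val b))%N) // => b _; rewrite trg_deg.
Qed.

Lemma trg_simple : symmetric e -> irreflexive e -> simple_graph trg.
Proof. by move=> es ei; split => [a b|a]; rewrite /trg; [apply: es|apply: ei]. Qed.

Definition hvT (j : nat) : nat := if j == 0%N then #|T| else HT j.-1.

Lemma trg_homvec m (j : 'I_m.+1) : symmetric e -> homvec trg j = hvT j.
Proof.
move=> es; rewrite /homvec /hvT; case: ifP => _; last exact: trg_hom.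
by rewrite /hom_S0 card_ord.
Qed.
End FinGraph.

Section Union.
Variables (T1 T2 : finType) (e1 : rel T1) (e2 : rel T2).
Definition eU : rel (T1 + T2) := fun x y =>
  match x, y with
  | inl a, inl b => e1 a b
  | inr a, inr b => e2 a b
  | _, _ => false end.

Lemma eU_sym : symmetric e1 -> symmetric e2 -> symmetric eU.
Proof. by move=> s1 s2 [a|a] [b|b] //=. Qed.
Lemma eU_irr : irreflexive e1 -> irreflexive e2 -> irreflexive eU.
Proof. by move=> s1 s2 [a|a] /=; [apply: s1|apply: s2]. Qed.

Lemma degU_l a : degT eU (inl a) = degT e1 a.
Proof. by rewrite /degT big_sumType /= [X in _ + X]big1 ?addn0. Qed.
Lemma degU_r a : degT eU (inr a) = degT e2 a.
Proof. by rewrite /degT big_sumType /= big1 ?add0n. Qed.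
Lemma sU_l a : sT eU (inl a) = sT e1 a.
Proof.
rewrite /sT big_sumType /= [X in _ + X]big1 ?addn0 //.
by apply: eq_bigr => b _; rewrite degU_l.
Qed.
Lemma sU_r a : sT eU (inr a) = sT e2 a.
Proof.
rewrite /sT big_sumType /= big1 ?add0n //.
by apply: eq_bigr => b _; rewrite degU_r.
Qed.
Lemma HU k : HT eU k = (HT e1 k + HT e2 k)%N.
Proof.
rewrite /HT big_sumType /=; congr (_ + _)%N; apply: eq_bigr => a _.
  by rewrite degU_l sU_l.
by rewrite degU_r sU_r.
Qed.
Lemma hvU j : hvT eU j = (hvT e1 j + hvT e2 j)%N.
Proof. by rewrite /hvT; case: ifP => _; rewrite ?HU // card_sum. Qed.
End Union.

Section Copies.
Variables (c : nat) (T : finType) (e : rel T).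
Definition eC : rel ('I_c * T) := fun x y => (x.1 == y.1) && e x.2 y.2.
Lemma eC_sym : symmetric e -> symmetric eC.
Proof. by move=> s [i a] [j b]; rewrite /eC /= eq_sym (s a b). Qed.
Lemma eC_irr : irreflexive e -> irreflexive eC.
Proof. by move=> s [i a]; rewrite /eC /= (s a) andbF. Qed.
Lemma sum_pair (F : 'I_c * T -> nat) :
  (\sum_x F x = \sum_(i < c) \sum_(a : T) F (i, a))%N.
Proof. by rewrite pair_big; apply: eq_bigr => [[i a]]. Qed.
Lemma degC i a : degT eC (i, a) = degT e a.
Proof.
rewrite /degT sum_pair (bigD1 i) //= [X in _ + X]big1 ?addn0; last first.
  by move=> j /negbTE ji; apply: big1 => b _; rewrite /eC /= eq_sym ji.
by apply: eq_bigr => b _; rewrite /eC /= eqxx.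
Qed.
Lemma sC i a : sT eC (i, a) = sT e a.
Proof.
rewrite /sT sum_pair (bigD1 i) //= [X in _ + X]big1 ?addn0; last first.
  by move=> j /negbTE ji; apply: big1 => b _; rewrite /eC /= eq_sym ji.
by apply: eq_bigr => b _; rewrite /eC /= eqxx degC.
Qed.
Lemma HC k : HT eC k = (c * HT e k)%N.
Proof.
rewrite {1}/HT sum_pair.
transitivity (\sum_(i < c) HT e k)%N.
  by apply: eq_bigr => i _; apply: eq_bigr => a _; rewrite degC sC.
by rewrite big_const_ord iter_addn_0 mulnC.
Qed.
Lemma hvC j : hvT eC j = (c * hvT e j)%N.
Proof. by rewrite /hvT; case: ifP => _; rewrite ?HC // card_prod card_ord. Qed.
End Copies.

Section GW.
Variables (P R Q : nat).
Definition GWT := ('I_P + ('I_R * 'I_Q))%type.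
Definition gwE : rel GWT := fun x y =>
  match x, y with
  | inl _, inr _ => true
  | inr _, inl _ => true
  | inr p, inr p' => (p.1 == p'.1) && (p.2 != p'.2)
  | inl _, inl _ => false end.

Lemma gw_sym : symmetric gwE.
Proof. by move=> [a|[r q]] [b|[r' q']] //=; rewrite eq_sym [q' == q]eq_sym. Qed.
Lemma gw_irr : irreflexive gwE.
Proof. by move=> [a|[r q]] //=; rewrite !eqxx andbF. Qed.

Lemma sum_pair2 (F : 'I_R * 'I_Q -> nat) :
  (\sum_x F x = \sum_(i < R) \sum_(a < Q) F (i, a))%N.
Proof. by rewrite pair_big; apply: eq_bigr => [[i a]]. Qed.

Lemma cnt_clique r q :
  (\sum_(x : 'I_R * 'I_Q) ((r == x.1) && (q != x.2) : nat))%N = Q.-1.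
Proof.
rewrite sum_pair2 (bigD1 r) //= [X in _ + X]big1 ?addn0; last first.
  by move=> j /negbTE jr; apply: big1 => b _; rewrite eq_sym jr.
rewrite eqxx /=.
rewrite (eq_bigr (fun b => if b != q then 1 else 0)%N); last first.
  by move=> b _; rewrite eq_sym; case: (b != q).
by rewrite -big_mkcond /= sum1_card cardC1 card_ord.
Qed.

Lemma deg_gw_l a : degT gwE (inl a) = (R * Q)%N.
Proof.
rewrite /degT big_sumType /= big1 ?add0n //.
by rewrite sum_nat_const card_prod !card_ord muln1.
Qed.

Lemma deg_gw_r p : degT gwE (inr p) = (P + Q.-1)%N.
Proof.
case: p => r q; rewrite /degT big_sumType /=.
rewrite sum_nat_const card_ord muln1; congr (_ + _)%N.
rewrite -(cnt_clique r q); apply: eq_bigr => [[r' q']] _ //.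
Qed.

Lemma s_gw_l a : sT gwE (inl a) = (R * Q * (P + Q.-1))%N.
Proof.
rewrite /sT big_sumType /= big1 ?add0n //.
rewrite (eq_bigr (fun _ => P + Q.-1)%N); last by move=> p _; rewrite deg_gw_r mul1n.
by rewrite sum_nat_const card_prod !card_ord.
Qed.

Lemma s_gw_r p : sT gwE (inr p) = (P * (R * Q) + Q.-1 * (P + Q.-1))%N.
Proof.
case: p => r q; rewrite /sT big_sumType /=.
congr (_ + _)%N.
  rewrite (eq_bigr (fun _ => R * Q)%N); last by move=> a _; rewrite deg_gw_l mul1n.
  by rewrite sum_nat_const card_ord.
rewrite (eq_bigr (fun x : 'I_R * 'I_Q => ((r == x.1) && (q != x.2) : nat) * (P + Q.-1)))%N.
  by rewrite -big_distrl /= cnt_clique.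
by move=> [r' q'] _; rewrite deg_gw_r.
Qed.

Lemma HT_gw k : HT gwE k =
  (P * ((R * Q) ^ k * (R * Q * (P + Q.-1))) +
   R * Q * ((P + Q.-1) ^ k * (P * (R * Q) + Q.-1 * (P + Q.-1))))%N.
Proof.
rewrite /HT big_sumType /=; congr (_ + _)%N.
  rewrite (eq_bigr (fun _ => (R * Q) ^ k * (R * Q * (P + Q.-1))))%N.
    by rewrite sum_nat_const card_ord.
  by move=> a _; rewrite deg_gw_l s_gw_l.
rewrite (eq_bigr (fun _ => (P + Q.-1) ^ k * (P * (R * Q) + Q.-1 * (P + Q.-1))))%N.
  by rewrite sum_nat_const card_prod !card_ord.
by move=> p _; rewrite deg_gw_r s_gw_r.
Qed.

Lemma hv_gw j : hvT gwE j = if j == 0%N then (P + R * Q)%N else HT gwE j.-1.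
Proof. by rewrite /hvT card_sum card_prod !card_ord. Qed.
End GW.

End PC.
Import PC.

Module PD.
Set Implicit Arguments. Unset Strict Implicit. Unset Printing Implicit Defensive.

Definition Th (f : nat -> nat) (a : nat) :=
  exists C, (0 < C)%N /\ forall t, (2 <= t)%N -> (f t <= C * t ^ a)%N /\ (t ^ a <= C * f t)%N.

Lemma Th_eqE f a b : Th f a -> a = b -> Th f b.
Proof. by move=> H <-. Qed.

Lemma Th_ext f g a : (forall t, (2 <= t)%N -> f t = g t) -> Th f a -> Th g a.
Proof.
move=> fg [C [C0 H]]; exists C; split => // t t2; rewrite -fg //; exact: H.
Qed.

Lemma Th_pow a : Th (fun t => t ^ a)%N a.
Proof. by exists 1%N; split => // t _; rewrite mul1n. Qed.

Lemma Th_const c : (0 < c)%N -> Th (fun _ => c) 0.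
Proof. by move=> c0; exists c; split => // t _; rewrite expn0 muln1; split => //; rewrite -{1}(muln1 1%N) leq_mul. Qed.

Lemma Th_mul f g a b : Th f a -> Th g b -> Th (fun t => f t * g t)%N (a + b).
Proof.
move=> [C1 [C10 H1]] [C2 [C20 H2]]; exists (C1 * C2)%N; split; first by rewrite muln_gt0 C10.
move=> t t2; have [u1 l1] := H1 t t2; have [u2 l2] := H2 t t2; split.
  by rewrite expnD mulnACA leq_mul.
by rewrite expnD mulnACA leq_mul.
Qed.

Lemma Th_add f g a b : Th f a -> Th g b -> Th (fun t => f t + g t)%N (maxn a b).
Proof.
move=> [C1 [C10 H1]] [C2 [C20 H2]]; exists (C1 + C2)%N; split; first by rewrite addn_gt0 C10.
move=> t t2; have [u1 l1] := H1 t t2; have [u2 l2] := H2 t t2.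
have t0 : (0 < t)%N by apply: leq_trans t2.
have ea : (t ^ a <= t ^ maxn a b)%N by rewrite leq_pexp2l // leq_maxl.
have eb : (t ^ b <= t ^ maxn a b)%N by rewrite leq_pexp2l // leq_maxr.
split.
  rewrite mulnDl leq_add //.
    by apply: (leq_trans u1); rewrite leq_mul2l ea orbT.
  by apply: (leq_trans u2); rewrite leq_mul2l eb orbT.
case: (leqP a b) => ab.
  apply: (leq_trans l2); rewrite mulnDl mulnDr; lia.
apply: (leq_trans l1); rewrite mulnDl mulnDr; lia.
Qed.

Lemma Th_expn f a k : Th f a -> Th (fun t => f t ^ k)%N (a * k).
Proof.
move=> H; elim: k => [|k IH].
  by rewrite muln0; apply: Th_ext (Th_const (ltn0Sn 0)) => t _; rewrite expn0.
apply: Th_eqE; first apply: Th_ext (Th_mul H IH).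
  by move=> t _; rewrite expnS.
by rewrite mulnS.
Qed.

Lemma Th_PQ a b : Th (fun t => t ^ a + (t ^ b).-1)%N (maxn a b).
Proof.
case: b => [|b].
  by rewrite maxn0; apply: Th_ext (Th_pow a) => t _; rewrite expn0 addn0.
apply: Th_add; first exact: Th_pow.
exists 2%N; split => // t t2.
have : (2 <= t ^ b.+1)%N by apply: (leq_trans t2); rewrite -{1}(expn1 t) leq_pexp2l //; apply: leq_trans t2.
lia.
Qed.

Lemma Th_sub1 b : (0 < b)%N -> Th (fun t => (t ^ b).-1)%N b.
Proof.
move=> b0; exists 2%N; split => // t t2.
have : (2 <= t ^ b)%N by apply: (leq_trans t2); rewrite -{1}(expn1 t) leq_pexp2l //; apply: leq_trans t2.
lia.
Qed.

Lemma Th_unif (F : nat -> nat -> nat) (E : nat -> nat) n :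
  (forall j, (j < n)%N -> Th (F j) (E j)) ->
  exists C, (0 < C)%N /\ forall t j, (2 <= t)%N -> (j < n)%N ->
    (F j t <= C * t ^ E j)%N /\ (t ^ E j <= C * F j t)%N.
Proof.
elim: n => [|n IH] H.
  by exists 1%N; split => // t j _.
have [C [C0 HC]] := IH (fun j jn => H j (ltnW jn)).
have [D [D0 HD]] := H n (ltnSn n).
exists (C + D)%N; split; first by rewrite addn_gt0 C0.
move=> t j t2; rewrite ltnS leq_eqVlt => /orP [/eqP ->|jn].
  have [u l] := HD t t2; split.
    by apply: (leq_trans u); rewrite leq_mul2r leq_addl orbT.
  by apply: (leq_trans l); rewrite leq_mul2r leq_addl orbT.
have [u l] := HC t j t2 jn; split.
  by apply: (leq_trans u); rewrite leq_mul2r leq_addr orbT.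
by apply: (leq_trans l); rewrite leq_mul2r leq_addr orbT.
Qed.

Definition gwH (p r q k t : nat) : nat :=
  let P := (t ^ p)%N in let R := (t ^ r)%N in let Q := (t ^ q)%N in
  (P * ((R * Q) ^ k * (R * Q * (P + Q.-1))) +
   R * Q * ((P + Q.-1) ^ k * (P * (R * Q) + Q.-1 * (P + Q.-1))))%N.

Definition Egw (p r q j : nat) : nat :=
  if j == 0%N then maxn p (r + q) else
  if q == 0%N then maxn (p + (r * j.-1 + (r + p))) (r + (p * j.-1 + (p + r)))
  else maxn (p + ((r + q) * j.-1 + ((r + q) + maxn p q)))
            ((r + q) + (maxn p q * j.-1 + maxn (p + (r + q)) (q + maxn p q))).

Lemma Th_gwH p r q j : (0 < j)%N ->
  Th (gwH p r q j.-1) (Egw p r q j).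
Proof.
move=> j0; rewrite /Egw (negbTE (lt0n_neq0 j0)).
case: (eqVneq q 0%N) => [->|q0].
  apply: Th_ext.
    move=> t _; rewrite /gwH expn0 /= addn0 !muln1 mul0n addn0.
    reflexivity.
  apply: Th_add; first apply: Th_mul; first exact: Th_pow.
    apply: Th_mul; first exact: (Th_expn _ (Th_pow r)).
    exact: Th_mul (Th_pow r) (Th_pow p).
  apply: Th_mul; first exact: Th_pow.
  apply: Th_mul; first exact: (Th_expn _ (Th_pow p)).
  exact: Th_mul (Th_pow p) (Th_pow r).
rewrite /gwH.
have PQ := Th_PQ p q.
have RQ := Th_mul (Th_pow r) (Th_pow q).
have Q1 : Th (fun t => (t ^ q).-1)%N q by apply: Th_sub1; rewrite lt0n.
apply: Th_add.
  apply: Th_mul; first exact: Th_pow.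
  apply: Th_mul; first exact: Th_expn RQ.
  exact: Th_mul RQ PQ.
apply: Th_mul; first exact: RQ.
apply: Th_mul; first exact: Th_expn PQ.
apply: Th_add; first exact: Th_mul (Th_pow p) RQ.
exact: Th_mul Q1 PQ.
Qed.

Lemma Th_gwV p r q : Th (fun t => t ^ p + t ^ r * t ^ q)%N (maxn p (r + q)).
Proof. exact: Th_add (Th_pow p) (Th_mul (Th_pow r) (Th_pow q)). Qed.

End PD.
Import PD.

Module PE.
Set Implicit Arguments. Unset Strict Implicit. Unset Printing Implicit Defensive.
Import Order.TTheory GRing.Theory Num.Theory.
Local Open Scope ring_scope.

Lemma trop_fin (R : realType) m (y : nat -> R) (E : nat -> nat)
  (T : nat -> finType) (e : forall t, rel (T t)) :
  (forall t, symmetric (e t)) -> (forall t, irreflexive (e t)) ->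
  (forall j, (j <= m)%N -> y j = (E j)%:R) ->
  (forall j, (j <= m)%N -> Th (fun t => hvT (e t) j) (E j)) ->
  @tropNU R m (@vec_of R m y).
Proof.
move=> es ei yE HT.
have [C [C0 HC]] := @Th_unif (fun j t => hvT (e t) j) E m.+1 (fun j jm => HT j jm).
apply: (@trop_family R m y E C (fun t => #|T t|) (fun t => trg (e t))) => //.
  by move=> t _; apply: trg_simple.
by move=> t j t2; rewrite trg_homvec //; apply: HC.
Qed.

Lemma Th_gw p r q j :
  Th (fun t => hvT (@gwE (t ^ p)%N (t ^ r)%N (t ^ q)%N) j) (Egw p r q j).
Proof.
case: (eqVneq j 0%N) => [->|j0].
  by apply: Th_ext (Th_gwV p r q) => t _; rewrite hv_gw.
have j0' : (0 < j)%N by rewrite lt0n.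
apply: Th_ext (Th_gwH p r q j0').
by move=> t _; rewrite hv_gw (negbTE j0) HT_gw.
Qed.

Definition PG (c p r q t : nat) := @eC (t ^ c)%N _ (@gwE (t ^ p)%N (t ^ r)%N (t ^ q)%N).
Arguments PG : clear implicits.
Definition EP (c p r q j : nat) : nat := (c + Egw p r q j)%N.

Lemma PG_sym c p r q t : symmetric (PG c p r q t).
Proof. apply: eC_sym; exact: gw_sym. Qed.
Lemma PG_irr c p r q t : irreflexive (PG c p r q t).
Proof. apply: eC_irr; exact: gw_irr. Qed.

Lemma Th_PG c p r q j : Th (fun t => hvT (PG c p r q t) j) (EP c p r q j).
Proof.
apply: Th_ext (Th_mul (Th_pow c) (Th_gw p r q j)) => t _.
by rewrite /PG hvC.
Qed.

Lemma trop2 (R : realType) m (y : nat -> R) c1 p1 r1 q1 c2 p2 r2 q2 :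
  (forall j, (j <= m)%N -> y j = (maxn (EP c1 p1 r1 q1 j) (EP c2 p2 r2 q2 j))%:R) ->
  @tropNU R m (@vec_of R m y).
Proof.
move=> yE.
apply: (@trop_fin R m y _ _ (fun t => eU (PG c1 p1 r1 q1 t) (PG c2 p2 r2 q2 t)) _ _ yE).
- by move=> t; apply: eU_sym; [apply: PG_sym|apply: PG_sym].
- by move=> t; apply: eU_irr; [apply: PG_irr|apply: PG_irr].
- move=> j _; apply: Th_ext (Th_add (Th_PG c1 p1 r1 q1 j) (Th_PG c2 p2 r2 q2 j)) => t _.
  by rewrite hvU.
Qed.

Lemma trop3 (R : realType) m (y : nat -> R) c1 p1 r1 q1 c2 p2 r2 q2 c3 p3 r3 q3 :
  (forall j, (j <= m)%N -> y j =
     (maxn (EP c1 p1 r1 q1 j) (maxn (EP c2 p2 r2 q2 j) (EP c3 p3 r3 q3 j)))%:R) ->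
  @tropNU R m (@vec_of R m y).
Proof.
move=> yE.
apply: (@trop_fin R m y _ _ (fun t => eU (PG c1 p1 r1 q1 t)
          (eU (PG c2 p2 r2 q2 t) (PG c3 p3 r3 q3 t))) _ _ yE).
- by move=> t; apply: eU_sym; [apply: PG_sym|apply: eU_sym; apply: PG_sym].
- by move=> t; apply: eU_irr; [apply: PG_irr|apply: eU_irr; apply: PG_irr].
- move=> j _; apply: Th_ext (Th_add (Th_PG c1 p1 r1 q1 j)
      (Th_add (Th_PG c2 p2 r2 q2 j) (Th_PG c3 p3 r3 q3 j))) => t _.
  by rewrite !hvU.
Qed.

Lemma natr_maxn (R : realDomainType) a b : ((maxn a b)%:R : R) = Num.max a%:R b%:R.
Proof.
case: (leqP a b) => h.
  by rewrite max_r // ler_nat.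
by rewrite max_l // ler_nat ltnW.
Qed.

Lemma s1E (R : realType) j : @s1 R j =
  (if j == 0%N then 3 else if j == 1%N then 6 else maxn (3 * j) (2 * j + 4))%N%:R.
Proof.
rewrite /s1; case: j => [|[|j]] //=.
by rewrite natr_maxn natrD !natrM.
Qed.

Lemma s1_trop (R : realType) m : @tropNU R m (@vec_of R m (@s1 R)).
Proof.
apply: (@trop2 R m _ 0 0 3 0 0 2 2 0) => j _; rewrite s1E; congr (_%:R).
rewrite /EP /Egw; case: j => [|[|j]] //=; lia.
Qed.

Lemma s2E (R : realType) j : @s2 R j =
  (if j == 0%N then 6 else if j == 1%N then 12 else if j == 2%N then 16 else 6 * j + 3)%N%:R.
Proof. by rewrite /s2; case: j => [|[|[|j]]] //=; rewrite natrD natrM. Qed.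
Lemma s3E (R : realType) j : @s3 R j =
  (if j == 0%N then 2 else if j == 1%N then 4 else if j == 2%N then 5 else 2 * j)%N%:R.
Proof. by rewrite /s3; case: j => [|[|[|j]]] //=; rewrite natrM. Qed.
Lemma s4E (R : realType) j : @s4 R j =
  (if j == 0%N then 3 else if j == 1%N then 6 else if j == 2%N then 8 else 3 * j + 1)%N%:R.
Proof. by rewrite /s4; case: j => [|[|[|j]]] //=; rewrite natrD natrM. Qed.

Lemma s2_trop (R : realType) m : @tropNU R m (@vec_of R m (@s2 R)).
Proof.
apply: (@trop2 R m _ 0 0 3 3 0 4 4 0) => j _; rewrite s2E; congr (_%:R).
rewrite /EP /Egw; case: j => [|[|[|j]]] //=; lia.
Qed.
Lemma s3_trop (R : realType) m : @tropNU R m (@vec_of R m (@s3 R)).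
Proof.
apply: (@trop2 R m _ 0 0 2 0 1 1 1 0) => j _; rewrite s3E; congr (_%:R).
rewrite /EP /Egw; case: j => [|[|[|j]]] //=; lia.
Qed.
Lemma s4_trop (R : realType) m : @tropNU R m (@vec_of R m (@s4 R)).
Proof.
apply: (@trop2 R m _ 0 0 2 1 0 2 2 0) => j _; rewrite s4E; congr (_%:R).
rewrite /EP /Egw; case: j => [|[|[|j]]] //=; lia.
Qed.

Lemma r2E (R : realType) i j : @r2 R i j =
  (if j == 0%N then i + 2 else if (j <= i)%N then i * (j + 2) else (i + 2) * j)%N%:R.
Proof. by rewrite /r2; case: (j == 0%N); last case: (j <= i)%N; rewrite ?natrM !natrD. Qed.

Lemma r2_trop (R : realType) m i : (5 <= i)%N -> @tropNU R m (@vec_of R m (@r2 R i)).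
Proof.
move=> i5.
apply: (@trop2 R m _ 0 0 (i + 2) 0 0 i i 0) => j _; rewrite r2E; congr (_%:R).
rewrite /EP /Egw; case: j => [|j] /=; first lia.
case: (leqP j.+1 i) => ji; nia.
Qed.

Lemma r1E (R : realType) a j : @r1 R (a + 5) j =
  (if j == 0%N then a * 6 + 15 else if j == 1%N then a * 12 + 30
   else if j == 2%N then a * 16 + 40
   else if (j <= a + 5)%N then (a * 6 + 12) * j + a * 3 + 15
   else (a * 6 + 15) * j)%N%:R.
Proof.
rewrite /r1; case: (j == 0%N); first by rewrite !natrD !natrM; ring.
case: (j == 1%N); first by rewrite !natrD !natrM; ring.
case: (j == 2%N); first by rewrite !natrD !natrM; ring.
by case: (j <= a + 5)%N; rewrite ?(natrD, natrM); ring.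
Qed.

Lemma r1_trop (R : realType) m i : (5 <= i)%N -> @tropNU R m (@vec_of R m (@r1 R i)).
Proof.
move=> i5; have -> : i = (i - 5 + 5)%N by lia.
move: (i - 5)%N => a.
apply: (@trop3 R m _ 0 0 (6 * a + 15) 0 0 6 (3 * a + 3) (3 * a + 8).+1
          0 (4 * a + 10) (4 * a + 10) 0) => j _; rewrite r1E; congr (_%:R).
rewrite /EP /Egw; case: j => [|[|[|j]]] /=; try lia.
case: (leqP j.+3 (a + 5)) => ja; nia.
Qed.

Lemma r3E (R : realType) a j : @r3 R (a + 5) j =
  (if j == 0%N then a * 3 + 6 else if j == 1%N then a * 6 + 12
   else if j == 2%N then a * 8 + 16
   else if (j <= a + 5)%N then (a * 3 + 5) * j + a + 5
   else (a * 3 + 6) * j)%N%:R.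
Proof.
rewrite /r3; case: (j == 0%N); first by rewrite ?(natrD, natrM); ring.
case: (j == 1%N); first by rewrite ?(natrD, natrM); ring.
case: (j == 2%N); first by rewrite ?(natrD, natrM); ring.
by case: (j <= a + 5)%N; rewrite ?(natrD, natrM); ring.
Qed.

Lemma r3_trop (R : realType) m i : (5 <= i)%N -> @tropNU R m (@vec_of R m (@r3 R i)).
Proof.
move=> i5; have -> : i = (i - 5 + 5)%N by lia.
move: (i - 5)%N => a.
apply: (@trop3 R m _ 0 0 (3 * a + 6) 0 0 2 (2 * a + 2) (a + 2).+1
          0 (2 * a + 4) (2 * a + 4) 0) => j _; rewrite r3E; congr (_%:R).
rewrite /EP /Egw; case: j => [|[|[|j]]] /=; try lia.
case: (leqP j.+3 (a + 5)) => ja; nia.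
Qed.

Lemma r4E (R : realType) a j : @r4 R (a + 5) j =
  (if j == 0%N then a * 2 + 5 else if j == 1%N then a * 4 + 10
   else if (j <= a + 5)%N then (a * 2 + 4) * j + a + 5
   else (a * 2 + 5) * j)%N%:R.
Proof.
rewrite /r4; case: (j == 0%N); first by rewrite ?(natrD, natrM); ring.
case: (j == 1%N); first by rewrite ?(natrD, natrM); ring.
by case: (j <= a + 5)%N; rewrite ?(natrD, natrM); ring.
Qed.

Lemma r4_trop (R : realType) m i : (5 <= i)%N -> @tropNU R m (@vec_of R m (@r4 R i)).
Proof.
move=> i5; have -> : i = (i - 5 + 5)%N by lia.
move: (i - 5)%N => a.
apply: (@trop2 R m _ 0 0 (2 * a + 5) 0 0 2 (a + 1) (a + 2).+1) => j _; rewrite r4E; congr (_%:R).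
rewrite /EP /Egw; case: j => [|[|j]] /=; try lia.
case: (leqP j.+2 (a + 5)) => ja; nia.
Qed.

Lemma r5_trop (R : realType) m i : (3 <= i)%N -> @tropNU R m (@vec_of R m (@r5 R i)).
Proof.
move=> i3; have -> : i = (i - 3 + 3)%N by lia.
move: (i - 3)%N => a.
apply: (@trop2 R m _ 0 0 1 0 (a + 3) 0 0 0) => j _; rewrite /r5 -natr_maxn; congr (_%:R).
rewrite /EP /Egw; case: j => [|j] /=; lia.
Qed.

Lemma r6E (R : realType) a j : @r6 R (a + 4) j =
  (if j == 0%N then a + 5 else if j == 1%N then a * 3 + 11
   else if (j <= a + 4)%N then (a + 3) * j + a * 2 + 8
   else (a + 5) * j)%N%:R.
Proof.
rewrite /r6; case: (j == 0%N); first by rewrite ?(natrD, natrM); ring.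
case: (j == 1%N); first by rewrite ?(natrD, natrM); ring.
by case: (j <= a + 4)%N; rewrite ?(natrD, natrM); ring.
Qed.

Lemma r6_trop (R : realType) m i : (4 <= i)%N -> @tropNU R m (@vec_of R m (@r6 R i)).
Proof.
move=> i4; have -> : i = (i - 4 + 4)%N by lia.
move: (i - 4)%N => a.
apply: (@trop2 R m _ 0 0 (a + 5) 0 2 (a + 3) (a + 3) 0) => j _; rewrite r6E; congr (_%:R).
rewrite /EP /Egw; case: j => [|[|j]] /=; try lia.
case: (leqP j.+2 (a + 4)) => ja; nia.
Qed.

End PE.
Import PE.

Unset Implicit Arguments.
Local Open Scope ring_scope.

Theorem lemma4p4 (R : realType) (m : nat) : (0 < m)%N ->
  @tropNU R m (@vec_of R m (@s1 R)) /\
  @tropNU R m (@vec_of R m (@s2 R)) /\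
  @tropNU R m (@vec_of R m (@s3 R)) /\
  @tropNU R m (@vec_of R m (@s4 R)) /\
  (forall i : nat, (5 <= i <= m - 1)%N -> @tropNU R m (@vec_of R m (@r1 R i))) /\
  (forall i : nat, (5 <= i <= m - 1)%N -> @tropNU R m (@vec_of R m (@r2 R i))) /\
  (forall i : nat, (5 <= i <= m - 1)%N -> @tropNU R m (@vec_of R m (@r3 R i))) /\
  (forall i : nat, (5 <= i <= m - 1)%N -> @tropNU R m (@vec_of R m (@r4 R i))) /\
  (forall i : nat, (3 <= i <= m - 1)%N -> @tropNU R m (@vec_of R m (@r5 R i))) /\
  (forall i : nat, (4 <= i <= m - 1)%N -> @tropNU R m (@vec_of R m (@r6 R i))).
Proof.
move=> _.
split; first exact: s1_trop.
split; first exact: s2_trop.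
split; first exact: s3_trop.
split; first exact: s4_trop.
split; first by move=> i /andP [i5 _]; apply: r1_trop.
split; first by move=> i /andP [i5 _]; apply: r2_trop.
split; first by move=> i /andP [i5 _]; apply: r3_trop.
split; first by move=> i /andP [i5 _]; apply: r4_trop.
split; first by move=> i /andP [i5 _]; apply: r5_trop.
by move=> i /andP [i5 _]; apply: r6_trop.
Qed.
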